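(* Let $f:\{-1,1\}^k\to\{0,1\}$, $\delta\in(0,1)$, $\zeta\in\mathcal{C}_\delta(f)$, and let $\zeta'=\zeta_{S,\pi,b}$ for an arbitrary nonempty $S\subseteq[k]$, permutation $\pi$ of $S$ and $b\in\{-1,1\}^{|S|}$. Let $\Sigma$ be the $|S|\times|S|$ covariance matrix with $\Sigma_{ij}=\zeta'(i,j)-\zeta'(0,i)\zeta'(0,j)$. Then $\Sigma$ is positive semidefinite with all eigenvalues at least $\delta$.
   Context: $\mathcal{C}(f)$ is the set of symmetric $(k+1)\times(k+1)$ moment matrices $\zeta(\nu)$ (indices $0..k$: $\zeta(i,i)=1$, $\zeta(0,i)=\mathbb{E}_\nu x_i$, $\zeta(i,j)=\mathbb{E}_\nu x_ix_j$ for $i\ne j$) of distributions $\nu$ on $f^{-1}(1)$, and $\mathcal{C}_\delta(f)=\{(1-\delta)\zeta+\delta I_{k+1}:\zeta\in\mathcal{C}(f)\}$. $\zeta_{S,\pi,b}$ is the submatrix on rows/columns $\{0\}\cup S$ with $S$-coordinates permuted by $\pi$, multiplied entrywise by $(1\ b)(1\ b)^T$; its rows/columns other than $0$ are indexed $1,\dots,|S|$. *)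

(* Defs.v *)
From HB Require Import structures.
From mathcomp Require Import all_boot all_order all_algebra all_fingroup.
Set Implicit Arguments. Unset Strict Implicit. Unset Printing Implicit Defensive.
Import Order.TTheory GRing.Theory Num.Theory.
Local Open Scope ring_scope.

(* Hypercube {-1,1}^k : points are x : {ffun 'I_k -> bool}; the boolean
   b encodes the sign (-1)^b, i.e. true <-> -1, false <-> 1. *)
Definition sgnb {R : nzRingType} (b : bool) : R := if b then -1 else 1.

Definition cube (k : nat) := {ffun 'I_k -> bool}.

(* The coordinates 0..k of a point: coordinate 0 is the constant 1,
   coordinate i+1 is x_i (as a +-1 real). *)
Definition ext_pt {R : nzRingType} (k : nat) (x : cube k) (i : 'I_k.+1) : R :=
  match unlift ord0 i with None => 1 | Some j => sgnb (x j) end.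

Definition distr_on {R : realFieldType} (k : nat) (f : cube k -> bool)
    (nu : {ffun cube k -> R}) : Prop :=
  (forall x, 0 <= nu x) /\ (\sum_x nu x = 1) /\ (forall x, ~~ f x -> nu x = 0).

(* moment matrix zeta(nu): 1 on the diagonal, E[x_i] on row/column 0,
   E[x_i x_j] elsewhere *)
Definition moment_mx {R : realFieldType} (k : nat) (nu : {ffun cube k -> R})
  : 'M[R]_k.+1 :=
  \matrix_(i, j) if i == j then 1
                 else \sum_x nu x * ext_pt x i * ext_pt x j.

Definition in_C {R : realFieldType} (k : nat) (f : cube k -> bool)
    (z : 'M[R]_k.+1) : Prop :=
  exists nu, distr_on f nu /\ z = moment_mx nu.

Definition in_Cdelta {R : realFieldType} (k : nat) (f : cube k -> bool)
    (delta : R) (z : 'M[R]_k.+1) : Prop :=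
  exists z0, in_C f z0 /\ z = (1 - delta) *: z0 + delta *: 1%:M.

(* zeta_{S,pi,b}: S listed in increasing order s_1 < ... < s_m (enum_val),
   index i in 1..m refers to coordinate pi(s_i); entries multiplied by
   (1 b)(1 b)^T. *)
Definition sub_index (k : nat) (S : {set 'I_k}) (pi : {perm 'I_k})
    (i : 'I_#|S|.+1) : 'I_k.+1 :=
  match unlift ord0 i with
  | None => ord0
  | Some j => lift ord0 (pi (enum_val j))
  end.

Definition bvec {R : nzRingType} (k : nat) (S : {set 'I_k})
    (b : {ffun 'I_#|S| -> bool}) (i : 'I_#|S|.+1) : R :=
  match unlift ord0 i with None => 1 | Some j => sgnb (b j) end.

Definition zeta_sub {R : realFieldType} (k : nat) (z : 'M[R]_k.+1)
    (S : {set 'I_k}) (pi : {perm 'I_k}) (b : {ffun 'I_#|S| -> bool})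
    : 'M[R]_#|S|.+1 :=
  \matrix_(i, j) (z (sub_index pi i) (sub_index pi j) * bvec b i * bvec b j).

Definition cov_mx {R : nzRingType} (m : nat) (z' : 'M[R]_m.+1) : 'M[R]_m :=
  \matrix_(i, j) (z' (lift ord0 i) (lift ord0 j)
                  - z' ord0 (lift ord0 i) * z' ord0 (lift ord0 j)).

Definition psd {R : realFieldType} (m : nat) (A : 'M[R]_m) : Prop :=
  A^T = A /\ forall v : 'rV[R]_m, 0 <= (v *m A *m v^T) 0 0.

(* Main.v *)
Require Import Defs.
From HB Require Import structures.
From mathcomp Require Import all_boot all_order all_algebra all_fingroup.
From mathcomp Require Import ring lra.
Import Order.TTheory GRing.Theory Num.Theory.
Local Open Scope ring_scope.
Set Implicit Arguments. Unset Strict Implicit. Unset Printing Implicit Defensive.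

Lemma ext_sq (R : realFieldType) k (x : cube k) i : ext_pt (R:=R) x i * ext_pt x i = 1.
Proof. rewrite /ext_pt; case: (unlift _ _) => [j|]; last by rewrite mulr1.
by rewrite /sgnb; case: (x j); rewrite ?mulrNN mulr1. Qed.

Lemma sgnb_sq (R : realFieldType) (c : bool) : sgnb (R:=R) c * sgnb c = 1.
Proof. by rewrite /sgnb; case: c; rewrite ?mulrNN mulr1. Qed.

Lemma momE (R : realFieldType) k f (nu : {ffun cube k -> R}) : distr_on f nu ->
  forall i j, moment_mx nu i j = \sum_x nu x * ext_pt x i * ext_pt x j.
Proof.
move=> [_ [Hs _]] i j; rewrite mxE; case: eqP => [<-|//].
under eq_bigr do rewrite -mulrA ext_sq mulr1. by rewrite Hs.
Qed.

Lemma quadE (R : realFieldType) m (A : 'M[R]_m) (v : 'rV[R]_m) :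
  (v *m A *m v^T) 0 0 = \sum_i \sum_j v 0 i * A i j * v 0 j.
Proof.
rewrite mxE exchange_big /=; apply: eq_bigr => j _.
rewrite [v^T _ _]mxE mxE big_distrl /=. apply: eq_bigr => i _. done. Qed.

Lemma zE (R : realFieldType) k f (nu : {ffun cube k -> R}) (d : R) :
  distr_on f nu -> forall r s,
  ((1-d) *: moment_mx nu + d *: 1%:M) r s =
  (1-d) * (\sum_x nu x * ext_pt x r * ext_pt x s) + d * (r == s)%:R.
Proof.
move=> Hnu r s; rewrite !mxE; case: eqP => [<-|//].
by rewrite -(@momE _ _ _ _ Hnu r r) mxE eqxx.
Qed.

Definition pidx k (S : {set 'I_k}) (pi : {perm 'I_k}) (i : 'I_#|S|) : 'I_k.+1 :=
  lift ord0 (pi (enum_val i)).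

Definition yv (R : realFieldType) k (S : {set 'I_k}) (pi : {perm 'I_k})
  (b : {ffun 'I_#|S| -> bool}) (x : cube k) (i : 'I_#|S|) : R :=
  ext_pt x (pidx pi i) * sgnb (b i).

Arguments yv {R k S} pi b x i.

Lemma pidx_inj k (S : {set 'I_k}) (pi : {perm 'I_k}) : injective (@pidx k S pi).
Proof. by move=> i j /lift_inj /perm_inj /enum_val_inj. Qed.

Lemma zsE (R : realFieldType) k (z : 'M[R]_k.+1) (S : {set 'I_k}) (pi : {perm 'I_k})
  (b : {ffun 'I_#|S| -> bool}) r s :
  zeta_sub z pi b r s = z (sub_index pi r) (sub_index pi s) * @bvec R _ _ b r * @bvec R _ _ b s.
Proof. by rewrite mxE. Qed.

Lemma covE (R : realFieldType) k f (nu : {ffun cube k -> R}) (d : R)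
  (S : {set 'I_k}) (pi : {perm 'I_k}) (b : {ffun 'I_#|S| -> bool}) :
  distr_on f nu -> forall i j,
  cov_mx (zeta_sub ((1-d) *: moment_mx nu + d *: 1%:M) pi b) i j =
  (1-d) * (\sum_x nu x * yv pi b x i * yv pi b x j) + d * (i == j)%:R
  - (1-d)^+2 * (\sum_x nu x * yv pi b x i) * (\sum_x nu x * yv pi b x j).
Proof.
move=> Hnu i j.
rewrite /cov_mx mxE !zsE /sub_index /bvec !liftK unlift_none.
rewrite !(zE _ Hnu) -!/(pidx pi _) (inj_eq (@pidx_inj _ _ pi)) eq_sym !(negbTE (neq_lift _ _)).
have e0 x : ext_pt (R:=R) x ord0 = 1 by rewrite /ext_pt unlift_none.
have E0 l : \sum_x nu x * ext_pt x ord0 * ext_pt x l = \sum_x nu x * ext_pt (R:=R) x l.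
  by apply: eq_bigr => x _; rewrite e0 mulr1.
rewrite !E0.
have E2 : \sum_x nu x * yv pi b x i * yv pi b x j =
   (\sum_x nu x * ext_pt x (pidx pi i) * ext_pt x (pidx pi j)) * sgnb (b i) * sgnb (b j).
  by rewrite !big_distrl; apply: eq_bigr => x _; rewrite /yv /=; ring.
have E1 l : \sum_x nu x * yv pi b x l = (\sum_x nu x * ext_pt x (pidx pi l)) * sgnb (b l).
  by rewrite !big_distrl; apply: eq_bigr => x _; rewrite /yv /=; ring.
rewrite E2 !E1; case: (eqVneq j i) => [->|_].
  rewrite /sgnb; case: (b i); rewrite /= ?mulr0 ?mulr1; ring.
rewrite /= mulr0 !addr0. ring.
Qed.

Lemma quad_lb (R : realFieldType) k f (nu : {ffun cube k -> R}) (d : R)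
  (S : {set 'I_k}) (pi : {perm 'I_k}) (b : {ffun 'I_#|S| -> bool}) :
  distr_on f nu -> 0 <= d -> d <= 1 -> forall v : 'rV[R]_#|S|,
  d * (\sum_i v 0 i ^+ 2) <=
  (v *m cov_mx (zeta_sub ((1-d) *: moment_mx nu + d *: 1%:M) pi b) *m v^T) 0 0.
Proof.
move=> Hnu d0 d1 v; rewrite quadE.
under [X in _ <= X]eq_bigr => i _ do [under eq_bigr => j _ do rewrite (covE _ _ _ Hnu)].
set Y := fun x => \sum_i v 0 i * yv pi b x i.
set m := fun i => \sum_x nu x * yv pi b x i.
set mu := \sum_i v 0 i * m i.
have Q1 : \sum_i \sum_j v 0 i * (\sum_x nu x * yv pi b x i * yv pi b x j) * v 0 j
    = \sum_x nu x * Y x ^+ 2.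
  transitivity (\sum_x \sum_i \sum_j nu x * (v 0 i * yv pi b x i) * (v 0 j * yv pi b x j)).
    rewrite [RHS]exchange_big; apply: eq_bigr => i _ /=.
    rewrite [RHS]exchange_big; apply: eq_bigr => j _ /=.
    by rewrite big_distrr big_distrl; apply: eq_bigr => x _ /=; ring.
  apply: eq_bigr => x _; rewrite /Y expr2 big_distrlr big_distrr; apply: eq_bigr => i _.
  by rewrite [RHS]big_distrr /=; apply: eq_bigr => j _ /=; ring.
have Q2 : \sum_i \sum_j v 0 i * (d * (i == j)%:R) * v 0 j = d * \sum_i v 0 i ^+ 2.
  rewrite big_distrr; apply: eq_bigr => i _.
  rewrite (bigD1 i) //= big1 ?addr0 => [|j Hj]; first by rewrite eqxx /= mulr1; ring.
  by rewrite eq_sym (negbTE Hj) /= mulr0 mulr0 mul0r.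
have Q3 : \sum_i \sum_j v 0 i * ((1 - d) ^+ 2 * m i * m j) * v 0 j
    = (1 - d) ^+ 2 * mu ^+ 2.
  rewrite [mu ^+ 2]expr2 /mu big_distrlr big_distrr; apply: eq_bigr => i _.
  by rewrite [RHS]big_distrr /=; apply: eq_bigr => j _ /=; ring.
have -> : \sum_i \sum_j v 0 i * ((1 - d) * (\sum_x nu x * yv pi b x i * yv pi b x j)
      + d * (i == j)%:R - (1 - d) ^+ 2 * m i * m j) * v 0 j =
   (1 - d) * (\sum_i \sum_j v 0 i * (\sum_x nu x * yv pi b x i * yv pi b x j) * v 0 j)
   + \sum_i \sum_j v 0 i * (d * (i == j)%:R) * v 0 j
   - \sum_i \sum_j v 0 i * ((1 - d) ^+ 2 * m i * m j) * v 0 j.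
  rewrite [(1 - d) * _]big_distrr -big_split -sumrB /=; apply: eq_bigr => i _.
  rewrite [(1 - d) * _]big_distrr -big_split -sumrB /=; apply: eq_bigr => j _; ring.
rewrite Q1 Q2 Q3.
have Emu : \sum_x nu x * Y x = mu.
  rewrite /Y /mu; under eq_bigr do rewrite big_distrr.
  rewrite exchange_big; apply: eq_bigr => i _ /=.
  rewrite /m big_distrr; apply: eq_bigr => x _ /=; ring.
have V : \sum_x nu x * (Y x - mu) ^+ 2 = \sum_x nu x * Y x ^+ 2 - mu ^+ 2.
  transitivity (\sum_x (nu x * Y x ^+ 2 - 2 * mu * (nu x * Y x) + mu ^+ 2 * nu x)).
    by apply: eq_bigr => x _; ring.
  case: Hnu => [_ [Hs _]].
  rewrite big_split sumrB /= -!big_distrr /= Hs Emu; ring.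
have V0 : 0 <= \sum_x nu x * (Y x - mu) ^+ 2.
  apply: sumr_ge0 => x _; apply: mulr_ge0; last exact: sqr_ge0.
  by case: Hnu => [H _]; apply: H.
move: V0; rewrite V.
have := sqr_ge0 mu.
move: (\sum_x nu x * Y x ^+ 2) (mu ^+ 2) => A B hB hAB.
have h1 : 0 <= (1 - d) * (A - B) by apply: mulr_ge0; lra.
have h2 : 0 <= d * (1 - d) * B by apply: mulr_ge0 => //; apply: mulr_ge0; lra.
lra.
Qed.

Theorem mainTheorem9 (R : realFieldType) (k : nat) (f : cube k -> bool)
  (delta : R) (z : 'M[R]_k.+1) (S : {set 'I_k}) (pi : {perm 'I_k})
  (b : {ffun 'I_#|S| -> bool}) :
  0 < delta -> delta < 1 ->
  in_Cdelta f delta z ->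
  S != set0 -> perm_on S pi ->
  psd (cov_mx (zeta_sub z pi b)) /\
  (forall a : R, eigenvalue (cov_mx (zeta_sub z pi b)) a -> delta <= a).
Proof.
move=> d0 d1 [z0 [[nu [Hnu ->]] ->]] _ _.
have d0' : 0 <= delta by apply: ltW.
have d1' : delta <= 1 by apply: ltW.
have ss (v : 'rV[R]_#|S|) : (v *m v^T) 0 0 = \sum_i v 0 i ^+ 2.
  by rewrite mxE; apply: eq_bigr => i _; rewrite mxE expr2.
split.
  split.
    apply/matrixP => i j; rewrite mxE !(covE _ _ _ Hnu) (eq_sym j i).
    have -> : \sum_x nu x * yv pi b x j * yv pi b x i =
              \sum_x nu x * yv pi b x i * yv pi b x j.
      by apply: eq_bigr => x _; ring.
    ring.
  move=> v; apply: (le_trans _ (@quad_lb _ _ _ _ _ _ pi b Hnu d0' d1' v)).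
  apply: mulr_ge0 => //; apply: sumr_ge0 => i _; exact: sqr_ge0.
move=> a /eigenvalueP [v Hv nz].
have := @quad_lb _ _ _ _ _ _ pi b Hnu d0' d1' v.
rewrite Hv -scalemxAl mxE ss.
have sp : 0 < \sum_i v 0 i ^+ 2.
  rewrite lt_def sumr_ge0 ?andbT => [|i _]; last exact: sqr_ge0.
  apply/eqP => H; move/eqP: nz; apply; apply/matrixP => r i.
  rewrite (ord1 r) mxE; apply/eqP; rewrite -sqrf_eq0; apply/eqP.
  by apply: (psumr_eq0P _ H) => // j _; exact: sqr_ge0.
by rewrite ler_pM2r.
Qed.
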